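(* Assume (A1)–(A2) below. There exist constants $\hat c_0,\hat C_0>0$, depending only on the bounds on $\rho$ and $P''(\rho)$ (and on $\underline a,\bar a$) from (A1)–(A2), such that for every $\varepsilon\in[0,\bar\varepsilon]$ and all $\boldsymbol u=(\rho,w)$, $\hat{\boldsymbol u}=(\hat\rho,\hat w)\in L^2(0,\ell)^2$ with $\underline\rho\le\rho,\hat\rho\le\bar\rho$ and $-\bar w\le w,\hat w\le\bar w$ a.e., $$\hat c_0\|\boldsymbol u-\hat{\boldsymbol u}\|_{\varepsilon}^2\le\mathcal{H}_\varepsilon(\boldsymbol u|\hat{\boldsymbol u})\le\hat C_0\|\boldsymbol u-\hat{\boldsymbol u}\|_{\varepsilon}^2.$$
   Context: Fix $\ell>0$, $a:[0,\ell]\to\mathbb{R}$, a constant $g$, $z:[0,\ell]\to\mathbb{R}$ and a smooth strictly convex $P:(0,\infty)\to\mathbb{R}$. (A1): positive constants $\underline\rho\le\bar\rho$, $\bar w$, $\bar\varepsilon$ with $\rho P''(\rho)\ge4\bar\varepsilon^2\bar w^2$ for $\underline\rho\le\rho\le\bar\rho$; $0<\underline a\le a\le\bar a$; $|gz|\le\bar g\bar z$. (A2): $0\le\varepsilon\le\bar\varepsilon$ and states satisfy $\underline\rho\le\rho\le\bar\rho$, $-\bar w\le w\le\bar w$. The energy is $\mathcal{H}_\varepsilon(\rho,w)=\int_0^\ell a(\varepsilon^2\rho w^2/2+P(\rho)+gz\rho)\,dx$ and the relative energy is $\mathcal{H}_\varepsilon(\boldsymbol u|\hat{\boldsymbol u})=\mathcal{H}_\varepsilon(\boldsymbol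 u)-\mathcal{H}_\varepsilon(\hat{\boldsymbol u})-\int_0^\ell a\big[(\varepsilon^2\hat w^2/2+P'(\hat\rho)+gz)(\rho-\hat\rho)+\varepsilon^2\hat\rho\hat w(w-\hat w)\big]dx$. The weighted norm is $\|(\rho,w)\|_\varepsilon^2=\|\sqrt a\rho\|_{L^2(0,\ell)}^2+\|\varepsilon w\|_{L^2(0,\ell)}^2$. *)

(* Defs.v *)
From HB Require Import structures.
From mathcomp Require Import all_boot all_order all_algebra.
From mathcomp Require Import all_classical all_reals all_analysis.
Set Implicit Arguments. Unset Strict Implicit. Unset Printing Implicit Defensive.
Import Order.TTheory GRing.Theory Num.Theory.
Import numFieldNormedType.Exports.
Local Open Scope classical_set_scope.
Local Open Scope ring_scope.

Section Defs.
Variable R : realType.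

Definition smooth_pos (P : R -> R) : Prop :=
  forall (n : nat) (x : R), 0 < x -> derivable (derive1n n P) x 1.

Definition strictly_convex_pos (P : R -> R) : Prop :=
  forall x y t : R, 0 < x -> 0 < y -> x != y -> 0 < t < 1 ->
    P (t * x + (1 - t) * y) < t * P x + (1 - t) * P y.

(* the interval (0, l) as a set; endpoints are Lebesgue-null *)
Definition dom (l : R) : set R := `[0, l]%classic.

Definition energy (l : R) (a z : R -> R) (g : R) (P : R -> R) (eps : R)
    (rho w : R -> R) : R :=
  Rintegral lebesgue_measure (dom l)
    (fun x => a x * (eps ^+ 2 * rho x * w x ^+ 2 / 2 + P (rho x) + g * z x * rho x)).

Definition rel_energy (l : R) (a z : R -> R) (g : R) (P : R -> R) (eps : R)
    (rho w rhoh wh : R -> R) : R :=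
  energy l a z g P eps rho w - energy l a z g P eps rhoh wh
  - Rintegral lebesgue_measure (dom l)
      (fun x => a x * ((eps ^+ 2 * wh x ^+ 2 / 2 + (derive1 P) (rhoh x) + g * z x)
                         * (rho x - rhoh x)
                       + eps ^+ 2 * rhoh x * wh x * (w x - wh x))).

Definition eps_norm2 (l : R) (a : R -> R) (eps : R) (r v : R -> R) : R :=
  Rintegral lebesgue_measure (dom l) (fun x => a x * r x ^+ 2)
  + Rintegral lebesgue_measure (dom l) (fun x => (eps * v x) ^+ 2).

End Defs.

(* Main.v *)
Require Import Defs.
From HB Require Import structures.
From mathcomp Require Import all_boot all_order all_algebra.
From mathcomp Require Import all_classical all_reals all_analysis.
From mathcomp Require Import measurable_realfun lebesgue_integral.
From mathcomp Require Import ring lra.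
Import Order.TTheory GRing.Theory Num.Theory.
Import numFieldNormedType.Exports.
Local Open Scope classical_set_scope.
Local Open Scope ring_scope.
Section Calc.
Variable R : realType.

Lemma cont_of_der (f df : R -> R) (a b : R) :
  (forall x, a <= x <= b -> is_derive x 1 f (df x)) ->
  {within `[a, b], continuous f}.
Proof.
move=> H; apply: derivable_within_continuous => x; rewrite in_itv /= => /H.
by case.
Qed.

Lemma taylor2_lb (G G1 G2 : R -> R) (k : R) :
  (forall s : R, 0 <= s <= 1 -> is_derive s 1 G (G1 s)) ->
  (forall s : R, 0 <= s <= 1 -> is_derive s 1 G1 (G2 s)) ->
  (forall s : R, 0 <= s <= 1 -> k <= G2 s) ->
  k / 2 <= G 1 - G 0 - G1 0.
Proof.
move=> dG dG1 hk.
have step1 : forall s : R, 0 <= s <= 1 -> k * s <= G1 s - G1 0.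
  move=> s /andP[s0 s1]; have [s0'|sp] := leP s 0.
    have -> : s = 0 by apply/eqP; rewrite eq_le s0 s0'.
    by rewrite mulr0 subrr.
  have h1 : forall x : R, x \in `]0, s[ -> is_derive x 1 G1 (G2 x).
    move=> x; rewrite in_itv /= => /andP[x0 x1]; apply: dG1; apply/andP; split; lra.
  have h2 : forall x : R, 0 <= x <= s -> is_derive x 1 G1 (G2 x).
    move=> x /andP[x0 x1]; apply: dG1; apply/andP; split; lra.
  have [c] := @MVT R G1 G2 0 s sp h1 (@cont_of_der G1 G2 0 s h2).
  rewrite in_itv /= => /andP[c0 c1] ->.
  rewrite subr0 ler_pM2r //; apply: hk; apply/andP; split; lra.
pose psi := fun t : R => G t - t * G1 0 - (k / 2) * (t * t).
pose dpsi := fun t : R => G1 t - G1 0 - k * t.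
have dpsiP : forall t : R, 0 <= t <= 1 -> is_derive t 1 psi (dpsi t).
  move=> t ht; rewrite /psi /dpsi.
  have dGt := dG t ht.
  have e : (fun t : R => G t - t * G1 0 - k / 2 * (t * t)) = G - (fun t => t * G1 0) - (fun t => k / 2 * (t * t)) by [].
  rewrite e; apply: is_derive_eq.
  by rewrite /GRing.scale /=; field.
have h1 : forall x : R, x \in `]0, 1[ -> is_derive x 1 psi (dpsi x).
  move=> x; rewrite in_itv /= => /andP[x0 x1]; apply: dpsiP; apply/andP; split; lra.
have [c] := @MVT R psi dpsi 0 1 ltr01 h1 (@cont_of_der psi dpsi 0 1 dpsiP).
rewrite in_itv /= => /andP[c0 c1].
rewrite /psi /dpsi => E.
have : 0 <= c <= 1 by apply/andP; split; lra.
move=> /step1.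
have : k*c - (G1 c - G1 0) = - (G 1 - 1 * G1 0 - k / 2 * (1 * 1) - (G 0 - 0 * G1 0 - k / 2 * (0 * 0))) by rewrite E; ring.
lra.
Qed.

Lemma taylor2_ub (G G1 G2 : R -> R) (k : R) :
  (forall s : R, 0 <= s <= 1 -> is_derive s 1 G (G1 s)) ->
  (forall s : R, 0 <= s <= 1 -> is_derive s 1 G1 (G2 s)) ->
  (forall s : R, 0 <= s <= 1 -> G2 s <= k) ->
  G 1 - G 0 - G1 0 <= k / 2.
Proof.
move=> dG dG1 hk.
have := @taylor2_lb (- G) (- G1) (- G2) (- k).
have -> : (- G) 1 - (- G) 0 - (- G1) 0 = - (G 1 - G 0 - G1 0) by change (- G 1 - - G 0 - - G1 0 = - (G 1 - G 0 - G1 0)); ring.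
have -> : - k / 2 = - (k / 2) by rewrite mulNr.
rewrite lerN2; apply.
- by move=> s hs; apply: is_deriveN; apply: dG.
- by move=> s hs; apply: is_deriveN; apply: dG1.
- by move=> s hs /=; rewrite lerN2; apply: hk.
Qed.

Lemma is_derive_aff (f : R -> R) (a d s df : R) :
  is_derive (a + s * d) 1 f df -> is_derive s 1 (fun t => f (a + t * d)) (df * d).
Proof.
move=> Hf.
have Hl : is_derive s 1 (fun t : R => a + t * d) d.
  have e : (fun t : R => a + t * d) = cst a + (fun t => t * d) by [].
  by rewrite e; apply: is_derive_eq; rewrite /GRing.scale /=; ring.
have dl : derivable (fun t : R => a + t * d) s 1 by case: Hl.
have df' : derivable f (a + s * d) 1 by case: Hf.
have dc : derivable (f \o (fun t : R => a + t * d)) s 1.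
  apply/derivable1_diffP; apply: differentiable_comp; exact/derivable1_diffP.
apply: DeriveDef => //.
rewrite -derive1E (derive1_comp dl) //= !derive1E.
by rewrite !derive_val.
Qed.


Lemma pointwise (P P1 P2 : R -> R) (lo hi wb m M eps r rh v vh : R) :
  0 < lo -> 0 < m ->
  (forall x : R, 0 < x -> is_derive x 1 P (P1 x)) ->
  (forall x : R, 0 < x -> is_derive x 1 P1 (P2 x)) ->
  (forall x : R, lo <= x <= hi -> m <= P2 x <= M) ->
  (forall x u : R, lo <= x <= hi -> - wb <= u <= wb -> 4 * (eps * u) ^+ 2 <= x * P2 x) ->
  lo <= r <= hi -> lo <= rh <= hi -> - wb <= v <= wb -> - wb <= vh <= wb ->
  (m / 4 * (r - rh) ^+ 2 + lo / 4 * (eps * (v - vh)) ^+ 2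
     <= P r - P rh - P1 rh * (r - rh) + eps ^+ 2 * (r * (v - vh) ^+ 2 / 2 + vh * (r - rh) * (v - vh))) /\
  (P r - P rh - P1 rh * (r - rh) + eps ^+ 2 * (r * (v - vh) ^+ 2 / 2 + vh * (r - rh) * (v - vh))
     <= (M + hi * M / 4) / 2 * (r - rh) ^+ 2 + (1 + hi) / 2 * (eps * (v - vh)) ^+ 2).
Proof.
move=> lo0 m0 D1 D2 hP2 hK /andP[r1 r2] /andP[rh1 rh2] /andP[v1 v2] /andP[vh1 vh2].
set d := r - rh; set e := v - vh.
set B := P r - P rh - _ + _.
pose G := fun t : R => P (rh + t * d) + eps ^+ 2 / 2 * ((rh + t * d) * ((vh + t * e) * (vh + t * e))).
pose G1 := fun t : R => P1 (rh + t * d) * d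
   + eps ^+ 2 / 2 * (d * ((vh + t * e) * (vh + t * e)) + 2 * (rh + t * d) * (vh + t * e) * e).
pose G2 := fun t : R => P2 (rh + t * d) * d * d
   + eps ^+ 2 * (2 * d * e * (vh + t * e) + (rh + t * d) * e * e).
have rng : forall t : R, 0 <= t <= 1 -> lo <= rh + t * d <= hi /\ - wb <= vh + t * e <= wb.
  move=> t /andP[t0 t1]; rewrite /d /e.
  have -> : rh + t * (r - rh) = (1 - t) * rh + t * r by ring.
  have -> : vh + t * (v - vh) = (1 - t) * vh + t * v by ring.
  have t1' : 0 <= 1 - t by lra.
  split; apply/andP; split; nra.
have dG : forall t : R, 0 <= t <= 1 -> is_derive t 1 G (G1 t).
  move=> t ht; have [/andP[x1 _] _] := rng t ht.
  have H1 := @is_derive_aff P rh d t _ (D1 _ (lt_le_trans lo0 x1)).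
  have e1 : G = (fun t => P (rh + t * d)) + (fun t => eps ^+ 2 / 2 * ((rh + t * d) * ((vh + t * e) * (vh + t * e)))) by [].
  rewrite e1; apply: is_derive_eq.
  by rewrite /G1 /GRing.scale /=; ring.
have dG1 : forall t : R, 0 <= t <= 1 -> is_derive t 1 G1 (G2 t).
  move=> t ht; have [/andP[x1 _] _] := rng t ht.
  have H1 := @is_derive_aff P1 rh d t _ (D2 _ (lt_le_trans lo0 x1)).
  have e1 : G1 = (fun t => P1 (rh + t * d) * d) + (fun t => eps ^+ 2 / 2 * (d * ((vh + t * e) * (vh + t * e)) + 2 * (rh + t * d) * (vh + t * e) * e)) by [].
  rewrite e1; apply: is_derive_eq.
  by rewrite /G2 /GRing.scale /=; field.
have eB : B = G 1 - G 0 - G1 0.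
  rewrite /B /G /G1 !mul0r !mul1r !addr0 /d /e. 
  have -> : rh + (r - rh) = r by ring.
  by field.
rewrite eB; split.
  have := @taylor2_lb G G1 G2 (m / 2 * d ^+ 2 + lo / 2 * (eps * e) ^+ 2) dG dG1.
  have -> : (m / 2 * d ^+ 2 + lo / 2 * (eps * e) ^+ 2) / 2 = m / 4 * d ^+ 2 + lo / 4 * (eps * e) ^+ 2 by field.
  apply => t ht; have [hx hw] := rng t ht.
  rewrite /G2.
  set q := rh + t * d in hx *; set u := vh + t * e in hw *.
  have /andP[p1 p2] := hP2 _ hx.
  have hu := hK _ _ hx hw.
  set p := P2 q in p1 p2 hu *.
  move: hx => /andP[q1 q2].
  have pp : 0 < p by lra.
  have qp : 0 < q by lra.
  have key : 0 <= p / 2 * d ^+ 2 + 2 * (eps * u) * d * (eps * e) + q / 2 * (eps * e) ^+ 2.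
    have : 0 <= 2 * p * (p / 2 * d ^+ 2 + 2 * (eps * u) * d * (eps * e) + q / 2 * (eps * e) ^+ 2).
      have -> : 2 * p * (p / 2 * d ^+ 2 + 2 * (eps * u) * d * (eps * e) + q / 2 * (eps * e) ^+ 2)
        = (p * d + 2 * (eps * u) * (eps * e)) ^+ 2 + (q * p - 4 * (eps * u) ^+ 2) * (eps * e) ^+ 2 by field.
      apply: addr_ge0; first exact: sqr_ge0.
      apply: mulr_ge0; [lra | exact: sqr_ge0].
    rewrite pmulr_rge0 //; lra.
  have h1 : m / 2 * d ^+ 2 <= p / 2 * d ^+ 2 by apply: ler_wpM2r; [exact: sqr_ge0 | lra].
  have h2 : lo / 2 * (eps * e) ^+ 2 <= q / 2 * (eps * e) ^+ 2 by apply: ler_wpM2r; [exact: sqr_ge0 | lra].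
  have -> : p * d * d + eps ^+ 2 * (2 * d * e * u + q * e * e) = p / 2 * d ^+ 2 + 2 * (eps * u) * d * (eps * e) + q / 2 * (eps * e) ^+ 2 + (p / 2 * d ^+ 2 + q / 2 * (eps * e) ^+ 2) by field.
  lra.
have := @taylor2_ub G G1 G2 ((M + hi * M / 4) * d ^+ 2 + (1 + hi) * (eps * e) ^+ 2) dG dG1.
have -> : ((M + hi * M / 4) * d ^+ 2 + (1 + hi) * (eps * e) ^+ 2) / 2 = (M + hi * M / 4) / 2 * d ^+ 2 + (1 + hi) / 2 * (eps * e) ^+ 2 by field.
apply => t ht; have [hx hw] := rng t ht.
rewrite /G2.
set q := rh + t * d in hx *; set u := vh + t * e in hw *.
have /andP[p1 p2] := hP2 _ hx.
have hu := hK _ _ hx hw.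
set p := P2 q in p1 p2 hu *.
move: hx => /andP[q1 q2].
have pp : 0 < p by lra.
have qp : 0 < q by lra.
have hu2 : (eps * u) ^+ 2 <= hi * M / 4.
  have : q * p <= hi * M by apply: ler_pM; lra.
  lra.
have c1 : 2 * (eps * u) * d * (eps * e) <= (eps * u) ^+ 2 * d ^+ 2 + (eps * e) ^+ 2.
  have : 0 <= ((eps * u) * d - eps * e) ^+ 2 by exact: sqr_ge0.
  have -> : ((eps * u) * d - eps * e) ^+ 2 = (eps * u) ^+ 2 * d ^+ 2 + (eps * e) ^+ 2 - 2 * (eps * u) * d * (eps * e) by ring.
  lra.
have c2 : (eps * u) ^+ 2 * d ^+ 2 <= hi * M / 4 * d ^+ 2 by apply: ler_wpM2r; [exact: sqr_ge0 | lra].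
have c3 : p * d ^+ 2 <= M * d ^+ 2 by apply: ler_wpM2r; [exact: sqr_ge0 | lra].
have c4 : q * (eps * e) ^+ 2 <= hi * (eps * e) ^+ 2 by apply: ler_wpM2r; [exact: sqr_ge0 | lra].
have -> : p * d * d + eps ^+ 2 * (2 * d * e * u + q * e * e) = p * d ^+ 2 + 2 * (eps * u) * d * (eps * e) + q * (eps * e) ^+ 2 by ring.
lra.
Qed.

End Calc.

Section Meas.
Context d (T : measurableType d) (R : realType) (mu : {measure set T -> \bar R}).
Local Open Scope ereal_scope.

Lemma nn_le (D : set T) (f g : T -> \bar R) :
  (forall x, D x -> 0 <= f x) -> (forall x, D x -> f x <= g x) ->
  \int[mu]_(x in D) f x <= \int[mu]_(x in D) g x.
Proof.
move=> f0 fg.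
have g0 : forall x, D x -> 0 <= g x by move=> x Dx; exact: le_trans (f0 x Dx) (fg x Dx).
rewrite !ge0_integralE //.
apply: ereal_sup_le => _ [h /= hf <-]; exists h => //= x.
apply: le_trans (hf x) _; rewrite !patchE; case: ifPn => // /set_mem; exact: fg.
Qed.

Lemma nn_null (D N : set T) (f g : T -> \bar R) : measurable D -> measurable N -> mu N = 0 ->
  (forall x, D x -> 0 <= f x) -> (forall x, D x -> 0 <= g x) ->
  measurable_fun D g -> (forall x, D x -> ~ N x -> f x = g x) ->
  \int[mu]_(x in D) f x = \int[mu]_(x in D) g x.
Proof.
move=> mD mN N0 f0 g0 mg fg.
have mgc : measurable_fun (D `&` ~` N) g.
  exact: (measurable_funS mD (@subIsetl _ D (~` N)) mg).
have aeN : forall h : T -> \bar R, (forall x, D x -> ~ N x -> h x = g x) -> ae_eq mu D h g.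
  move=> h hg; exists N; split => // x /= hx; apply: contrapT => Nx; apply: hx => Dx.
  exact: hg.
apply/eqP; rewrite eq_le; apply/andP; split.
- pose h2 := (g \_ (~` N)) \+ ((cst +oo) \_ N).
  have mh2 : measurable_fun D h2.
    apply: emeasurable_funD.
      exact/(measurable_restrict g (measurableC mN) mD).
    by apply/(measurable_restrict (cst +oo) mN mD); exact: measurable_cst.
  apply: (@le_trans _ _ (\int[mu]_(x in D) h2 x)).
    apply: nn_le => // x Dx; rewrite /h2 /= !patchE.
    case: (boolP (x \in N)) => [/set_mem xN|/negP xN].
      rewrite ifF; first by rewrite add0e leey.
      by apply/negP; rewrite in_setC => /negP; apply; exact/mem_set.
    rewrite ifT; last by rewrite in_setC; apply/negP.
    by rewrite adde0 fg //; apply: contra_not xN; exact: mem_set.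
  rewrite (ge0_ae_eq_integral mD mh2 mg) //.
  + move=> x Dx; rewrite /h2 /= !patchE; apply: adde_ge0; case: ifPn => //; [move=> _; exact: g0|move=> _; exact: leey].
  + apply: aeN => x Dx xN; rewrite /h2 /= !patchE ifT; last by rewrite in_setC; apply/negP => /set_mem.
    by rewrite ifF ?adde0 //; apply/negP => /set_mem.
- pose h1 := g \_ (~` N).
  have mh1 : measurable_fun D h1.
    exact/(measurable_restrict g (measurableC mN) mD).
  have h10 : forall x, D x -> 0 <= h1 x by move=> x Dx; rewrite /h1 patchE; case: ifPn => // _; exact: g0.
  apply: (@le_trans _ _ (\int[mu]_(x in D) h1 x)); last first.
    apply: nn_le => // x Dx; rewrite /h1 !patchE.
    case: (boolP (x \in ~` N)) => [/set_mem xN|_]; last exact: f0.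
    by rewrite fg.
  rewrite (ge0_ae_eq_integral mD mh1 mg) //.
  apply: aeN => x Dx xN; rewrite /h1 patchE ifT //; rewrite in_setC; apply/negP => /set_mem.
  exact: xN.
Qed.


Lemma int_null (D N : set T) (f g : T -> \bar R) : measurable D -> measurable N -> mu N = 0 ->
  measurable_fun D g -> (forall x, D x -> ~ N x -> f x = g x) ->
  \int[mu]_(x in D) f x = \int[mu]_(x in D) g x.
Proof.
move=> mD mN N0 mg fg.
rewrite integralE [RHS]integralE; congr (_ - _).
  apply: (@nn_null D N (f^\+) (g^\+) mD mN N0).
  - by move=> x _; exact: funepos_ge0.
  - by move=> x _; exact: funepos_ge0.
  - exact: measurable_funepos.
  - by move=> x Dx Nx; rewrite !funeposE fg.
apply: (@nn_null D N (f^\-) (g^\-) mD mN N0).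
- by move=> x _; exact: funeneg_ge0.
- by move=> x _; exact: funeneg_ge0.
- exact: measurable_funeneg.
- by move=> x Dx Nx; rewrite !funenegE fg.
Qed.

Local Close Scope ereal_scope.

Lemma Rint_null (D N : set T) (f g : T -> R) : measurable D -> measurable N -> mu N = 0 ->
  measurable_fun D g -> (forall x, D x -> ~ N x -> f x = g x) ->
  Rintegral mu D f = Rintegral mu D g.
Proof.
move=> mD mN N0 mg fg; rewrite /Rintegral; congr fine.
apply: (@int_null D N (EFin \o f) (EFin \o g) mD mN N0); first exact/measurable_EFinP.
by move=> x Dx Nx /=; rewrite fg.
Qed.

End Meas.

Section OK.
Variables (R : realType) (l : R).

Definition okf (f : R -> R) := measurable_fun (dom l) f /\ exists C, forall x, dom l x -> `|f x| <= C.

Lemma mdom : measurable (dom l).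
Proof. exact: measurable_itv. Qed.

Lemma okD f g : okf f -> okf g -> okf (fun x => f x + g x).
Proof.
move=> [mf [Cf hf]] [mg [Cg hg]]; split; first exact: measurable_funD.
exists (Cf + Cg) => x Dx; apply: le_trans (ler_normD _ _) _; apply: lerD; [exact: hf|exact: hg].
Qed.

Lemma okB f g : okf f -> okf g -> okf (fun x => f x - g x).
Proof.
move=> [mf [Cf hf]] [mg [Cg hg]]; split; first exact: measurable_funB.
exists (Cf + Cg) => x Dx; apply: le_trans (ler_normB _ _) _; apply: lerD; [exact: hf|exact: hg].
Qed.

Lemma okM f g : okf f -> okf g -> okf (fun x => f x * g x).
Proof.
move=> [mf [Cf hf]] [mg [Cg hg]]; split; first exact: measurable_funM.
exists (Cf * Cg) => x Dx; rewrite normrM; apply: ler_pM => //; [exact: hf|exact: hg].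
Qed.

Lemma okC (c : R) : okf (fun _ => c).
Proof. split; first exact: measurable_cst. by exists `|c|. Qed.

Lemma ok_int f : 0 < l -> okf f -> lebesgue_measure.-integrable (dom l) (EFin \o f).
Proof.
move=> l0 [mf [C hC]]; apply: measurable_bounded_integrable => //.
- exact: mdom.
- have h := lebesgue_measure_itv `[0, l]%R.
  rewrite /= lte_fin l0 /= in h.
  rewrite -EFinB in h.
  by rewrite /dom [ltLHS](_ : _ = (l - 0)%:E) ?ltry //.
- rewrite /bounded_near; exists C; split; first exact: num_real.
  move=> M CM x Dx /=; apply: le_trans (hC x Dx) _; exact: ltW.
Qed.

End OK.

Section Help.
Variable R : realType.

Definition clamp (lo hi y : R) := Num.max lo (Num.min y hi).

Lemma clamp_in lo hi y : lo <= hi -> lo <= clamp lo hi y <= hi.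
Proof.
move=> lh; rewrite /clamp le_max lexx /= ge_max lh /= ge_min lexx orbT.
by [].
Qed.

Lemma clamp_id lo hi y : lo <= y <= hi -> clamp lo hi y = y.
Proof.
move=> /andP[h1 h2]; rewrite /clamp (min_l h2) (max_r h1) //.
Qed.

Lemma clamp_meas (D : set R) lo hi (f : R -> R) : measurable_fun D f ->
  measurable_fun D (fun x => clamp lo hi (f x)).
Proof.
move=> mf; rewrite /clamp.
apply: (measurable_maxr (f := fun _ => lo) (g := fun x => Num.min (f x) hi)).
  exact: measurable_cst.
by apply: (measurable_minr (f := f) (g := fun _ => hi)) => //.
Qed.

Lemma meas_pos (f : R -> R) : (forall x : R, 0 < x -> derivable f x 1) ->
  measurable_fun (`]0, +oo[%classic : set R) f.
Proof.
move=> H; apply: open_continuous_measurable_fun; first exact: interval_open.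
move=> x; rewrite inE /= in_itv andbT => x0.
apply: differentiable_continuous; apply/derivable1_diffP; exact: H.
Qed.

Lemma cont_bnd (f : R -> R) lo hi : 0 < lo -> lo <= hi ->
  (forall x : R, 0 < x -> derivable f x 1) ->
  exists C, forall x, lo <= x <= hi -> `|f x| <= C.
Proof.
move=> lo0 lh H.
have cf : {within `[lo, hi], continuous f}.
  apply: derivable_within_continuous => x; rewrite in_itv /= => /andP[x1 _].
  apply: H; exact: lt_le_trans lo0 x1.
have [c1 _ h1] := EVT_max lh cf.
have [c2 _ h2] := EVT_min lh cf.
exists (`|f c1| + `|f c2|) => x hx.
have hx' : x \in `[lo, hi] by rewrite in_itv.
have := h1 x hx'; have := h2 x hx'.
rewrite ler_norml => a b; apply/andP; split.
  have := ler_norm (f c1); have := ler_normr (f c2) 0.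
  rewrite !normr0.
  have := normr_ge0 (f c1); have := normrN (f c2); move=> *.
  have := ler_norm (- f c2); rewrite normrN; lra.
have := ler_norm (f c1); have := normr_ge0 (f c2); lra.
Qed.

Lemma final_pw (A Bp dd ee m lo a_lo a_hi K1 K2 : R) :
  0 < a_lo -> a_lo <= A <= a_hi -> 0 < m -> 0 < lo -> 0 <= K2 ->
  0 <= dd -> 0 <= ee ->
  m / 4 * dd + lo / 4 * ee <= Bp -> Bp <= K1 * dd + K2 * ee ->
  (Num.min (m / 4) (a_lo * lo / 4)) * (A * dd + ee) <= A * Bp /\
  A * Bp <= (Num.max K1 (a_hi * K2)) * (A * dd + ee).
Proof.
move=> al /andP[A1 A2] m0 lo0 K20 d0 e0 hl hu.
set c0 := Num.min _ _; set C0 := Num.max _ _.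
have c1 : c0 <= m / 4 by rewrite ge_min lexx.
have c2 : c0 <= a_lo * lo / 4 by rewrite ge_min lexx orbT.
have C1 : K1 <= C0 by rewrite le_max lexx.
have C2 : a_hi * K2 <= C0 by rewrite le_max lexx orbT.
have A0 : 0 < A by lra.
split.
  have h1 : A * (m / 4 * dd + lo / 4 * ee) <= A * Bp by rewrite ler_pM2l.
  have h2 : c0 * (A * dd) <= m / 4 * (A * dd) by apply: ler_wpM2r => //; exact: mulr_ge0 (ltW A0) d0.
  have h3 : c0 * ee <= A * lo / 4 * ee.
    apply: ler_wpM2r => //; apply: le_trans c2 _.
    rewrite ler_pM2r //; rewrite ler_pM2r //; lra.
  have e1 : A * (m / 4 * dd + lo / 4 * ee) = m / 4 * (A * dd) + A * lo / 4 * ee by ring.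
  rewrite e1 in h1.
  have -> : c0 * (A * dd + ee) = c0 * (A * dd) + c0 * ee by ring.
  lra.
have h1 : A * Bp <= A * (K1 * dd + K2 * ee) by rewrite ler_pM2l.
have h2 : K1 * (A * dd) <= C0 * (A * dd) by apply: ler_wpM2r => //; exact: mulr_ge0 (ltW A0) d0.
have h3' : A * K2 <= a_hi * K2 by apply: ler_wpM2r.
have h3 : A * K2 * ee <= C0 * ee by apply: ler_wpM2r => //; exact: le_trans h3' C2.
have e1 : A * (K1 * dd + K2 * ee) = K1 * (A * dd) + A * K2 * ee by ring.
rewrite e1 in h1.
have -> : C0 * (A * dd + ee) = C0 * (A * dd) + C0 * ee by ring.
lra.
Qed.

End Help.

Arguments okf {R}.
Arguments okD {R l f g}.
Arguments okB {R l f g}.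
Arguments okM {R l f g}.
Arguments okC {R l}.
Arguments ok_int {R l f}.
Arguments mdom {R}.
Arguments clamp {R}.
Arguments clamp_in {R}.
Arguments clamp_id {R}.
Arguments clamp_meas {R}.
Arguments meas_pos {R}.
Arguments cont_bnd {R}.
Arguments final_pw {R}.
Arguments pointwise {R}.

Lemma okX2 (R : realType) (l : R) (f : R -> R) : okf l f -> okf l (fun x => f x ^+ 2).
Proof.
move=> h; rewrite (_ : (fun x => f x ^+ 2) = (fun x => f x * f x)); first exact: okM.
by apply: funext => x; rewrite expr2.
Qed.

Lemma okcl (R : realType) (l lo hi : R) (f : R -> R) : lo <= hi -> measurable_fun (dom l) f ->
  okf l (fun x => clamp lo hi (f x)).
Proof.
move=> lh mf; split; first exact: clamp_meas.
exists (`|lo| + `|hi|) => x _; have /andP[c1 c2] := clamp_in lo hi (f x) lh.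
rewrite ler_norml; have := ler_norm hi; have := ler_norm (- lo); rewrite normrN.
have := normr_ge0 lo; have := normr_ge0 hi; move=> *; apply/andP; split; lra.
Qed.

Ltac okt := repeat first [assumption | apply: okB | apply: okD | apply: okX2 | apply: okM | apply: okC].

Theorem lemma4p1 (R : realType) (P : R -> R) (rho_lo rho_hi a_lo a_hi : R) :
  smooth_pos P -> strictly_convex_pos P ->
  0 < rho_lo -> rho_lo <= rho_hi -> 0 < a_lo -> a_lo <= a_hi ->
  exists c0 C0 : R, 0 < c0 /\ 0 < C0 /\
  forall (wbar epsbar gbar zbar l g : R) (a z : R -> R),
    0 < wbar -> 0 < epsbar -> 0 < gbar -> 0 < zbar -> 0 < l ->
    (forall r, rho_lo <= r <= rho_hi ->
       4 * epsbar ^+ 2 * wbar ^+ 2 <= r * derive1n 2 P r) ->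
    measurable_fun (dom l) a -> measurable_fun (dom l) z ->
    (forall x, dom l x -> a_lo <= a x <= a_hi) ->
    (forall x, dom l x -> `|g * z x| <= gbar * zbar) ->
    forall eps : R, 0 <= eps <= epsbar ->
    forall rho w rhoh wh : R -> R,
      measurable_fun (dom l) rho -> measurable_fun (dom l) w ->
      measurable_fun (dom l) rhoh -> measurable_fun (dom l) wh ->
      {ae lebesgue_measure, forall x, dom l x ->
         [/\ rho_lo <= rho x <= rho_hi, rho_lo <= rhoh x <= rho_hi,
             - wbar <= w x <= wbar & - wbar <= wh x <= wbar]} ->
      c0 * eps_norm2 l a eps (fun x => rho x - rhoh x) (fun x => w x - wh x)
        <= rel_energy l a z g P eps rho w rhoh wh
      /\ rel_energy l a z g P eps rho w rhoh wh
        <= C0 * eps_norm2 l a eps (fun x => rho x - rhoh x) (fun x => w x - wh x).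
Proof.
move=> sm _ lo0 lohi alo0 alohi.
set lo := rho_lo; set hi := rho_hi.
pose P1 := derive1 P; pose P2 := derive1n 2 P.
have D1 : forall x : R, 0 < x -> is_derive x 1 P (P1 x).
  move=> x x0; have h : derivable P x 1 := sm 0%N x x0.
  by apply: is_derive_eq (derivableP h) _; rewrite -derive1E.
have D2 : forall x : R, 0 < x -> is_derive x 1 P1 (P2 x).
  move=> x x0; have h : derivable P1 x 1 := sm 1%N x x0.
  by apply: is_derive_eq (derivableP h) _; rewrite -derive1E.
have dP : forall x : R, 0 < x -> derivable P x 1 by move=> x x0; exact: (sm 0%N x x0).
have dP1 : forall x : R, 0 < x -> derivable P1 x 1 by move=> x x0; exact: (sm 1%N x x0).
have dP2 : forall x : R, 0 < x -> derivable P2 x 1 by move=> x x0; exact: (sm 2%N x x0).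
have cP2 : {within `[lo, hi], continuous P2}.
  apply: derivable_within_continuous => x; rewrite in_itv /= => /andP[x1 _].
  apply: dP2; exact: lt_le_trans lo0 x1.
have [cM cMin hM] := EVT_max lohi cP2.
set M := P2 cM.
have Hm : exists m : R, 0 < m /\ forall wbar epsbar : R, 0 < wbar -> 0 < epsbar ->
    (forall r, lo <= r <= hi -> 4 * epsbar ^+ 2 * wbar ^+ 2 <= r * P2 r) ->
    forall x, lo <= x <= hi -> m <= P2 x.
  case: (pselect (exists m : R, 0 < m /\ forall x, lo <= x <= hi -> m <= P2 x)) => [[m [m0 hm]]|nom].
    by exists m; split => // *; exact: hm.
  exists 1; split => // wbar epsbar w0 e0 hyp; exfalso; apply: nom.
  have c0 : 0 < 4 * epsbar ^+ 2 * wbar ^+ 2 by rewrite !mulr_gt0 // exprn_gt0.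
  have hi0 : 0 < hi by exact: lt_le_trans lo0 lohi.
  exists (4 * epsbar ^+ 2 * wbar ^+ 2 / hi); split; first exact: divr_gt0.
  move=> x hx; have := hyp x hx; move: hx => /andP[x1 x2] hc.
  rewrite ler_pdivrMr //.
  have x0 : 0 < x by exact: lt_le_trans lo0 x1.
  have p0 : 0 < P2 x.
    rewrite -(pmulr_rgt0 _ x0); exact: lt_le_trans c0 hc.
  apply: le_trans hc _; rewrite [leRHS]mulrC; apply: ler_wpM2r => //; exact: ltW.
have [m [m0 Hm']] := Hm.
exists (Num.min (m / 4) (a_lo * lo / 4)), (Num.max ((M + hi * M / 4) / 2) (a_hi * ((1 + hi) / 2))).
split; first by rewrite lt_min; apply/andP; split; rewrite ?divr_gt0 ?mulr_gt0.
split.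
  rewrite lt_max; apply/orP; right; rewrite mulr_gt0 ?divr_gt0 //; first exact: lt_le_trans alo0 alohi.
  by rewrite addr_gt0 // (lt_le_trans lo0 lohi).
move=> wbar epsbar gbar zbar l g a z w0 e0 gb0 zb0 l0 hP2 ma mz ha hgz eps heps
  rho w rhoh wh mrho mw mrhoh mwh hae.
have hm := Hm' wbar epsbar w0 e0 hP2.
have hP2b : forall x, lo <= x <= hi -> m <= P2 x <= M.
  move=> x hx; rewrite hm //=; apply: hM; by rewrite in_itv.
have hK : forall x u : R, lo <= x <= hi -> - wbar <= u <= wbar -> 4 * (eps * u) ^+ 2 <= x * P2 x.
  move=> x u hx /andP[u1 u2]; apply: le_trans (hP2 x hx).
  move: heps => /andP[e1 e2].
  have h1 : eps ^+ 2 <= epsbar ^+ 2 by rewrite !expr2; nra.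
  have h2 : u ^+ 2 <= wbar ^+ 2 by rewrite !expr2; nra.
  rewrite exprMn -mulrA; apply: ler_wpM2l => //.
  by apply: ler_pM => //; exact: sqr_ge0.
have [N [mN N0 hN]] := hae.
have good : forall x, dom l x -> ~ N x -> [/\ lo <= rho x <= hi, lo <= rhoh x <= hi,
    - wbar <= w x <= wbar & - wbar <= wh x <= wbar].
  move=> x Dx Nx; apply: contrapT => hb; apply: Nx; apply: hN => /= H; apply: hb; exact: H Dx.
have wb : - wbar <= wbar by lra.
pose rc := fun x => clamp lo hi (rho x).
pose rhc := fun x => clamp lo hi (rhoh x).
pose wc := fun x => clamp (- wbar) wbar (w x).
pose whc := fun x => clamp (- wbar) wbar (wh x).
have rcin : forall x, lo <= rc x <= hi by move=> x; exact: clamp_in.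
have rhcin : forall x, lo <= rhc x <= hi by move=> x; exact: clamp_in.
have wcin : forall x, - wbar <= wc x <= wbar by move=> x; exact: clamp_in.
have whcin : forall x, - wbar <= whc x <= wbar by move=> x; exact: clamp_in.
have eqs : forall x, dom l x -> ~ N x -> [/\ rho x = rc x, rhoh x = rhc x, w x = wc x & wh x = whc x].
  move=> x Dx Nx; have [h1 h2 h3 h4] := good x Dx Nx.
  by rewrite /rc /rhc /wc /whc !clamp_id.
have okrc : okf l rc by exact: okcl.
have okrhc : okf l rhc by exact: okcl.
have okwc : okf l wc by exact: okcl.
have okwhc : okf l whc by exact: okcl.
have oka : okf l a.
  split => //; exists a_hi => x Dx; have /andP[h1 h2] := ha x Dx.
  rewrite ger0_norm //; exact: le_trans (ltW alo0) h1.
have okgz : okf l (fun x => g * z x).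
  split; last by exists (gbar * zbar).
  by apply: measurable_funM => //; exact: measurable_cst.
have mpos : measurable (`]0, +oo[%classic : set R) by exact: measurable_itv.
have okPc : forall (F : R -> R) (f : R -> R), (forall x : R, 0 < x -> derivable F x 1) ->
    (forall x, lo <= f x <= hi) -> measurable_fun (dom l) f -> okf l (fun x => F (f x)).
  move=> F f dF fin mf; split.
    apply: (measurable_comp mpos) => //; last exact: meas_pos.
    move=> _ [x _ <-]; rewrite /= in_itv andbT; have /andP[h1 _] := fin x.
    exact: lt_le_trans lo0 h1.
  have [C hC] := cont_bnd F lo hi lo0 lohi dF.
  by exists C => x _; apply: hC.
have okP : okf l (fun x => P (rc x)) := okPc P rc dP rcin (proj1 okrc).
have okP1 : okf l (fun x => P1 (rhc x)) := okPc P1 rhc dP1 rhcin (proj1 okrhc).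
pose E1 := fun x => a x * (eps ^+ 2 * rc x * wc x ^+ 2 / 2 + P (rc x) + g * z x * rc x).
pose E2 := fun x => a x * (eps ^+ 2 * rhc x * whc x ^+ 2 / 2 + P (rhc x) + g * z x * rhc x).
pose L := fun x => a x * ((eps ^+ 2 * whc x ^+ 2 / 2 + P1 (rhc x) + g * z x) * (rc x - rhc x)
                       + eps ^+ 2 * rhc x * whc x * (wc x - whc x)).
pose N1 := fun x => a x * (rc x - rhc x) ^+ 2.
pose N2 := fun x => (eps * (wc x - whc x)) ^+ 2.
have okE1 : okf l E1 by rewrite /E1; okt.
have okPh : okf l (fun x => P (rhc x)) := okPc P rhc dP rhcin (proj1 okrhc).
have okE2 : okf l E2 by rewrite /E2; okt.
have okL : okf l L by rewrite /L; okt.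
have okN1 : okf l N1 by rewrite /N1; okt.
have okN2 : okf l N2 by rewrite /N2; okt.
have I1 : Rintegral lebesgue_measure (dom l)
    (fun x => a x * (eps ^+ 2 * rho x * w x ^+ 2 / 2 + P (rho x) + g * z x * rho x))
    = Rintegral lebesgue_measure (dom l) E1.
  apply: (@Rint_null _ _ _ lebesgue_measure (dom l) N _ E1 (mdom l) mN N0 (proj1 okE1)) => x Dx Nx.
  by have [h1 h2 h3 h4] := eqs x Dx Nx; rewrite h1 h3.
have I2 : Rintegral lebesgue_measure (dom l)
    (fun x => a x * (eps ^+ 2 * rhoh x * wh x ^+ 2 / 2 + P (rhoh x) + g * z x * rhoh x))
    = Rintegral lebesgue_measure (dom l) E2.
  apply: (@Rint_null _ _ _ lebesgue_measure (dom l) N _ E2 (mdom l) mN N0 (proj1 okE2)) => x Dx Nx.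
  by have [h1 h2 h3 h4] := eqs x Dx Nx; rewrite h2 h4.
have I3 : Rintegral lebesgue_measure (dom l)
      (fun x => a x * ((eps ^+ 2 * wh x ^+ 2 / 2 + (derive1 P) (rhoh x) + g * z x)
                         * (rho x - rhoh x)
                       + eps ^+ 2 * rhoh x * wh x * (w x - wh x)))
    = Rintegral lebesgue_measure (dom l) L.
  apply: (@Rint_null _ _ _ lebesgue_measure (dom l) N _ L (mdom l) mN N0 (proj1 okL)) => x Dx Nx.
  by have [h1 h2 h3 h4] := eqs x Dx Nx; rewrite h1 h2 h3 h4.
have I4 : Rintegral lebesgue_measure (dom l) (fun x => a x * (fun x => rho x - rhoh x) x ^+ 2)
    = Rintegral lebesgue_measure (dom l) N1.
  apply: (@Rint_null _ _ _ lebesgue_measure (dom l) N _ N1 (mdom l) mN N0 (proj1 okN1)) => x Dx Nx.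
  by have [h1 h2 h3 h4] := eqs x Dx Nx; rewrite /= h1 h2.
have I5 : Rintegral lebesgue_measure (dom l) (fun x => (eps * (fun x => w x - wh x) x) ^+ 2)
    = Rintegral lebesgue_measure (dom l) N2.
  apply: (@Rint_null _ _ _ lebesgue_measure (dom l) N _ N2 (mdom l) mN N0 (proj1 okN2)) => x Dx Nx.
  by have [h1 h2 h3 h4] := eqs x Dx Nx; rewrite /= h3 h4.
rewrite /rel_energy /energy /eps_norm2 I1 I2 I3 I4 I5.
have md := mdom l.
rewrite -(@RintegralB _ _ _ lebesgue_measure _ _ _ md (ok_int l0 okE1) (ok_int l0 okE2)).
rewrite -(@RintegralB _ _ _ lebesgue_measure _ _ _ md (ok_int l0 (okB okE1 okE2)) (ok_int l0 okL)).
rewrite -(@RintegralD _ _ _ lebesgue_measure _ _ _ md (ok_int l0 okN1) (ok_int l0 okN2)).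
set c0 := Num.min _ _; set C0 := Num.max _ _.
rewrite -(@RintegralZl _ _ _ lebesgue_measure _ _ c0 md (ok_int l0 (okD okN1 okN2))).
rewrite -(@RintegralZl _ _ _ lebesgue_measure _ _ C0 md (ok_int l0 (okD okN1 okN2))).
have K20 : 0 <= (1 + hi) / 2.
  by apply: divr_ge0 => //; apply: addr_ge0 => //; apply: ltW; exact: lt_le_trans lo0 lohi.
have pw : forall x, dom l x ->
    c0 * (N1 x + N2 x) <= E1 x - E2 x - L x /\ E1 x - E2 x - L x <= C0 * (N1 x + N2 x).
  move=> x Dx.
  have [pl pu] := pointwise P P1 P2 lo hi wbar m M eps (rc x) (rhc x) (wc x) (whc x)
    lo0 m0 D1 D2 hP2b hK (rcin x) (rhcin x) (wcin x) (whcin x).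
  have [fl fu] := final_pw _ _ _ _ _ _ _ _ _ _ alo0 (ha x Dx) m0 lo0 K20 (sqr_ge0 _) (sqr_ge0 _) pl pu.
  have eB : E1 x - E2 x - L x = a x * (P (rc x) - P (rhc x) - P1 (rhc x) * (rc x - rhc x)
       + eps ^+ 2 * (rc x * (wc x - whc x) ^+ 2 / 2 + whc x * (rc x - rhc x) * (wc x - whc x))).
    by rewrite /E1 /E2 /L; field.
  by rewrite eB /N1 /N2; split.
split; apply: (@le_Rintegral _ _ _ lebesgue_measure _ _ _ md).
- exact: (ok_int l0 (@okM _ _ (fun _ => c0) _ (okC c0) (okD okN1 okN2))).
- exact: (ok_int l0 (okB (okB okE1 okE2) okL)).
- by move=> x Dx; case: (pw x Dx).
- exact: (ok_int l0 (okB (okB okE1 okE2) okL)).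
- exact: (ok_int l0 (@okM _ _ (fun _ => C0) _ (okC C0) (okD okN1 okN2))).
- by move=> x Dx; case: (pw x Dx).
Qed.
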